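(* Let $\alpha\in\mathbb{N}=\{0,1,2,\dots\}$. (i) If $m$ is a positive odd integer with $m>6\alpha+2$ and $\mathbb{S}=\langle 6,6\alpha+2,m\rangle$, then $Betti(\mathbb{S})=\{18\alpha+6,\,2m\}$. (ii) If $n\in\mathbb{N}$ with $3\nmid n$ and $n>6\alpha+3$ and $\mathbb{S}=\langle 6,6\alpha+3,n\rangle$, then $Betti(\mathbb{S})=\{12\alpha+6,\,3n\}$. (iii) If $p$ is a positive odd integer with $p>6\alpha+4$ and $\mathbb{S}=\langle 6,6\alpha+4,p\rangle$, then $Betti(\mathbb{S})=\{18\alpha+12,\,2p\}$.
   Context: $\mathbb{N}$ denotes the set of nonnegative integers. For positive integers $a_1,\dots,a_e$ with $\gcd=1$, $\langle a_1,\dots,a_e\rangle=\{\lambda_1a_1+\dots+\lambda_ea_e:\lambda_i\in\mathbb{N}\}$. For $a\in\mathbb{S}$, $Z(a)=\{(\eta_1,\dots,\eta_e)\in\mathbb{N}^e:\sum\eta_ia_i=a\}$. For $x,y\in\mathbb{N}^e$, $\gcd\{x,y\}$ is the componentwise minimum. For $a\in\mathbb{S}\setminus\{0\}$, $\nabla_a$ is the graph with vertex set $Z(a)$, with $x,y$ adjacent iff $\gcd\{x,y\}\neq0$; $a$ is a Betti element if $\nabla_a$ is disconnected, and $Betti(\mathbb{S})$ is the set of Betti elements. *)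

(* Defs.v *)
From mathcomp Require Import all_boot.
From Stdlib Require Import Relation_Operators.
Set Implicit Arguments. Unset Strict Implicit. Unset Printing Implicit Defensive.

(* The semigroup S = <a_1,...,a_e> is represented by its list of generators A. *)

Definition is_fact (A : seq nat) (a : nat) (x : seq nat) : Prop :=
  size x = size A /\ sumn [seq p.1 * p.2 | p <- zip x A] = a.

Definition in_sgp (A : seq nat) (a : nat) : Prop := exists x, is_fact A a x.

Definition gcdv (x y : seq nat) : seq nat := [seq minn p.1 p.2 | p <- zip x y].

Definition adj (x y : seq nat) : Prop := has (fun k => k != 0) (gcdv x y).

Definition nabla_edge (A : seq nat) (a : nat) (x y : seq nat) : Prop :=
  is_fact A a x /\ is_fact A a y /\ adj x y.

Definition nabla_connected (A : seq nat) (a : nat) : Prop :=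
  forall x y, is_fact A a x -> is_fact A a y ->
    clos_refl_trans (seq nat) (nabla_edge A a) x y.

Definition is_betti (A : seq nat) (a : nat) : Prop :=
  in_sgp A a /\ a <> 0 /\ ~ nabla_connected A a.

(* Main.v *)
Require Import Defs.
From mathcomp Require Import all_boot.
From mathcomp Require Import zify.
From Stdlib Require Import Relation_Operators.

Set Implicit Arguments. Unset Strict Implicit. Unset Printing Implicit Defensive.

Section Gen.
Variables a c q k e d : nat.
Hypotheses (Ha : 0 < a) (Hc : 0 < c) (Hk : 0 < k) (He : 0 < e) (Hd : 0 < d).
Hypothesis Hrel : k * a = e * c.
Hypothesis Hmin : forall x y, 0 < x -> x * a = y * c -> e <= y.
Hypothesis Hdq : exists x0 y0, d * q = x0 * a + y0 * c.
Hypothesis Hdiv : forall x y z x' y',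
  x * a + y * c + z * q = x' * a + y' * c -> d %| z.

Definition AA := [:: a; c; q].

Lemma factI b x y z : x * a + y * c + z * q = b -> is_fact AA b [:: x; y; z].
Proof. move=> H; split => //=; lia. Qed.

Lemma adj1 x y z x' y' z' : 0 < x -> 0 < x' -> adj [:: x; y; z] [:: x'; y'; z'].
Proof. move=> h1 h2; rewrite /adj /gcdv /=; apply/orP; left; lia. Qed.
Lemma adj2 x y z x' y' z' : 0 < y -> 0 < y' -> adj [:: x; y; z] [:: x'; y'; z'].
Proof. move=> h1 h2; rewrite /adj /gcdv /=; apply/orP; right; apply/orP; left; lia. Qed.
Lemma adj3 x y z x' y' z' : 0 < z -> 0 < z' -> adj [:: x; y; z] [:: x'; y'; z'].
Proof. move=> h1 h2; rewrite /adj /gcdv /=; apply/orP; right; apply/orP; right;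
  apply/orP; left; lia. Qed.

Lemma conn_sym b u v : clos_refl_trans _ (nabla_edge AA b) u v ->
  clos_refl_trans _ (nabla_edge AA b) v u.
Proof.
elim=> [s t [h1 [h2 h3]]| s | s t r _ IH1 _ IH2].
- apply: rt_step; split=> //; split=> //.
  move: h3; rewrite /adj /gcdv => /hasP [i /mapP [[i1 i2] hi ->]] /= hne.
  apply/hasP; exists (minn i2 i1); last by rewrite minnC.
  apply/mapP; exists (i2, i1) => //.
  elim: s t hi {h1 h2 hne} => [|s0 s IH] [|t0 t] //=.
  rewrite in_cons => /orP [/eqP [-> ->]|h]; rewrite in_cons ?eqxx //.
  by rewrite IH ?orbT.
- exact: rt_refl.
- exact: rt_trans IH2 IH1.
Qed.

Lemma z0_aux b y x' : b <> e * c -> y * c = b -> x' * a = b ->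
  clos_refl_trans _ (nabla_edge AA b) [:: 0; y; 0] [:: x'; 0; 0].
Proof.
move=> Hb Hu Hv.
case: (posnP x') => hx.
  subst x'. have hy: y = 0 by nia. subst y; exact: rt_refl.
have hey := Hmin hx (etrans Hv (esym Hu)).
have hne : e != y by apply/eqP => E; subst y; apply: Hb; by [].
have hlt : e < y by rewrite ltn_neqAle hne hey.
have Hw : k * a + (y - e) * c + 0 * q = b.
  rewrite mulnBl Hrel. have : e * c <= y * c by rewrite leq_mul2r hey orbT.
  lia.
apply: (@rt_trans _ _ _ [:: k; y - e; 0]); apply: rt_step.
- split; first by apply: factI; lia.
  split; first by apply: factI.
  apply: adj2; lia.
- split; first by apply: factI.
  split; first by apply: factI; lia.
  exact: adj1.
Qed.

Lemma z0 b x y x' y' : b <> e * c -> x * a + y * c = b -> x' * a + y' * c = b ->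
  clos_refl_trans _ (nabla_edge AA b) [:: x; y; 0] [:: x'; y'; 0].
Proof.
move=> Hb Hu Hv.
have fu : is_fact AA b [:: x; y; 0] by apply: factI; lia.
have fv : is_fact AA b [:: x'; y'; 0] by apply: factI; lia.
case: (posnP x) => hx; case: (posnP x') => hx'; try (by apply: rt_step; split=> //;
  split=> //; apply: adj1);
case: (posnP y) => hy; case: (posnP y') => hy'; try (by apply: rt_step; split=> //;
  split=> //; apply: adj2); subst.
all: try (have -> : y = 0 by nia); try (have -> : y' = 0 by nia);
  try (have -> : x = 0 by nia); try (have -> : x' = 0 by nia); try exact: rt_refl.
all: try (apply: z0_aux => //; lia).
all: apply: conn_sym; apply: z0_aux => //; lia.
Qed.

Lemma mixed b : b <> e * c -> b <> d * q -> forall z x y x' y', 0 < z ->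
  x * a + y * c + z * q = b -> x' * a + y' * c = b ->
  clos_refl_trans _ (nabla_edge AA b) [:: x; y; z] [:: x'; y'; 0].
Proof.
move=> Hb1 Hb2 z; elim/ltn_ind: z => z IH x y x' y' hz Hu Hv.
have dz : d %| z.
  have E : x * a + y * c + z * q = x' * a + y' * c by lia.
  exact: (Hdiv E).
have zd : d <= z by apply: dvdn_leq.
case: Hdq => x0 [y0 Hq].
have Hw : (x + x0) * a + (y + y0) * c + (z - d) * q = b.
  rewrite mulnBl !mulnDl. have : d * q <= z * q by rewrite leq_mul2r zd orbT.
  lia.
have Huw : clos_refl_trans _ (nabla_edge AA b) [:: x; y; z] [:: x + x0; y + y0; z - d].
  apply: rt_step; split; first by apply: factI.
  split; first by apply: factI.
  case: (posnP x) => hx; last by apply: adj1; lia.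
  case: (posnP y) => hy; last by apply: adj2; lia.
  case: (posnP (z - d)) => hzd; last by apply: adj3.
  exfalso; apply: Hb2; subst; have -> : z = d by lia. lia.
apply: rt_trans Huw _.
case: (posnP (z - d)) => hzd.
  rewrite hzd; apply: z0 => //; lia.
apply: IH => //; lia.
Qed.

Lemma gen_connected b : b <> e * c -> b <> d * q -> nabla_connected AA b.
Proof.
move=> Hb1 Hb2 u v [su Hu] [sv Hv].
case: u su Hu => [|x [|y [|z [|]]]] //= _ Hu.
case: v sv Hv => [|x' [|y' [|z' [|]]]] //= _ Hv.
rewrite addn0 in Hu Hv.
case: (posnP z) => hz; case: (posnP z') => hz'.
- subst; apply: z0 => //; lia.
- subst; apply: conn_sym; apply: (mixed Hb1 Hb2) => //; lia.
- subst; apply: (mixed Hb1 Hb2) => //; lia.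
- apply: rt_step; split; first by apply: factI; lia.
  split; first by apply: factI; lia.
  exact: adj3.
Qed.

End Gen.

Lemma isolated_not_conn A b u v : is_fact A b u -> is_fact A b v -> u <> v ->
  (forall w, is_fact A b w -> adj u w -> w = u) -> ~ nabla_connected A b.
Proof.
move=> fu fv nuv Hiso Hc.
have : forall s t, clos_refl_trans _ (nabla_edge A b) s t -> s = u -> t = u.
  move=> s t; elim=> [s0 t0 [_ [h2 h3]] E | // | s0 t0 r0 _ IH1 _ IH2 E].
  - subst s0; exact: Hiso.
  - exact: IH2 (IH1 E).
move=> /(_ u v (Hc u v fu fv) erefl) E; exact: nuv (esym E).
Qed.

Lemma factE a c q b w : is_fact [:: a; c; q] b w ->
  exists x y z, w = [:: x; y; z] /\ x * a + y * c + z * q = b.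
Proof.
move=> [hs H]; move: hs H.
case: w => [|x [|y [|z [|]]]] //= _ H; exists x, y, z; split => //; lia.
Qed.

Lemma adjE x y z x' y' z' : adj [:: x; y; z] [:: x'; y'; z'] ->
  (0 < x /\ 0 < x') \/ (0 < y /\ 0 < y') \/ (0 < z /\ 0 < z').
Proof.
rewrite /adj /gcdv /= => /orP [h|/orP [h|/orP [h|//]]]; lia.
Qed.

Lemma par2 m alpha r x y z x' y' : odd m ->
  x * 6 + y * (6 * alpha + r.*2) + z * m = x' * 6 + y' * (6 * alpha + r.*2) -> 2 %| z.
Proof.
move=> hm E; have hm' : m = 2 * m./2 + 1.
  by rewrite -{1}(odd_double_half m) hm -muln2; lia.
rewrite hm' in E; nia.
Qed.

Lemma case1 alpha m : 0 < m -> odd m -> 6 * alpha + 2 < m ->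
  forall b, is_betti [:: 6; 6 * alpha + 2; m] b <-> b = 18 * alpha + 6 \/ b = 2 * m.
Proof.
move=> m0 om mlt b.
have Hdq : exists x0 y0, 2 * m = x0 * 6 + y0 * (6 * alpha + 2).
  have := divn_eq m 3; have := ltn_pmod m (isT : 0 < 3).
  case E: (m %% 3) => [|[|[|r]]] // _ hm.
  - by exists (m %/ 3), 0; lia.
  - by exists (m %/ 3 - alpha), 1; lia.
  - by exists (m %/ 3 - 2 * alpha), 2; lia.
split.
- move=> [hin [hb0 hnc]].
  case: (b =P 18 * alpha + 6) => [->|h1]; [by left|].
  case: (b =P 2 * m) => [->|h2]; [by right|].
  exfalso; apply: hnc.
  apply: (@gen_connected 6 (6 * alpha + 2) m (3 * alpha + 1) 3 2) => //; try lia.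
  + move=> x y hx; case: y => [|[|[|y]]] //=; lia.
- move=> [->|->].
  + split; first by exists [:: 3 * alpha + 1; 0; 0]; split => //=; lia.
    split; first lia.
    apply: (@isolated_not_conn _ _ [:: 0; 3; 0] [:: 3 * alpha + 1; 0; 0]).
    * split => //=; lia.
    * split => //=; lia.
    * by case; lia.
    * move=> w /factE [x [y [z [-> Hw]]]] /adjE hadj.
      have hy : 0 < y by lia.
      clear hadj.
      have hz : 2 %| z by apply: (@par2 m alpha 1 x y z 0 3); lia.
      have z0 : z = 0.
        case: z hz Hw => [|[|z]] // _ Hw; nia.
      subst z; case: y hy Hw => [|[|[|[|y]]]] // _ Hw; try lia.
      by have -> : x = 0 by lia.
  + case: Hdq => x0 [y0 Hq].
    split; first by exists [:: 0; 0; 2]; split => //=; lia.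
    split; first lia.
    apply: (@isolated_not_conn _ _ [:: 0; 0; 2] [:: x0; y0; 0]).
    * split => //=; lia.
    * split => //=; lia.
    * by case.
    * move=> w /factE [x [y [z [-> Hw]]]] /adjE hadj.
      have hz : 0 < z by lia.
      have hz2 : 2 %| z by apply: (@par2 m alpha 1 x y z x0 y0); lia.
      case: z hz hz2 Hw {hadj} => [|[|[|z]]] // _ _ Hw; last by nia.
      have -> : x = 0 by nia.
      by have -> : y = 0 by nia.
Qed.

Lemma case3 alpha m : 0 < m -> odd m -> 6 * alpha + 4 < m ->
  forall b, is_betti [:: 6; 6 * alpha + 4; m] b <-> b = 18 * alpha + 12 \/ b = 2 * m.
Proof.
move=> m0 om mlt b.
have Hdq : exists x0 y0, 2 * m = x0 * 6 + y0 * (6 * alpha + 4).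
  have := divn_eq m 3; have := ltn_pmod m (isT : 0 < 3).
  case E: (m %% 3) => [|[|[|r]]] // _ hm.
  - by exists (m %/ 3), 0; lia.
  - by exists (m %/ 3 - 2 * alpha - 1), 2; lia.
  - by exists (m %/ 3 - alpha), 1; lia.
split.
- move=> [hin [hb0 hnc]].
  case: (b =P 18 * alpha + 12) => [->|h1]; [by left|].
  case: (b =P 2 * m) => [->|h2]; [by right|].
  exfalso; apply: hnc.
  apply: (@gen_connected 6 (6 * alpha + 4) m (3 * alpha + 2) 3 2) => //; try lia.
  + move=> x y hx; case: y => [|[|[|y]]] //=; lia.
- move=> [->|->].
  + split; first by exists [:: 3 * alpha + 2; 0; 0]; split => //=; lia.
    split; first lia.
    apply: (@isolated_not_conn _ _ [:: 0; 3; 0] [:: 3 * alpha + 2; 0; 0]).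
    * split => //=; lia.
    * split => //=; lia.
    * by case; lia.
    * move=> w /factE [x [y [z [-> Hw]]]] /adjE hadj.
      have hy : 0 < y by lia.
      clear hadj.
      have hz : 2 %| z by apply: (@par2 m alpha 2 x y z 0 3); lia.
      have z0 : z = 0.
        case: z hz Hw => [|[|z]] // _ Hw; nia.
      subst z; case: y hy Hw => [|[|[|[|y]]]] // _ Hw; try lia.
      by have -> : x = 0 by lia.
  + case: Hdq => x0 [y0 Hq].
    split; first by exists [:: 0; 0; 2]; split => //=; lia.
    split; first lia.
    apply: (@isolated_not_conn _ _ [:: 0; 0; 2] [:: x0; y0; 0]).
    * split => //=; lia.
    * split => //=; lia.
    * by case.
    * move=> w /factE [x [y [z [-> Hw]]]] /adjE hadj.
      have hz : 0 < z by lia.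
      have hz2 : 2 %| z by apply: (@par2 m alpha 2 x y z x0 y0); lia.
      case: z hz hz2 Hw {hadj} => [|[|[|z]]] // _ _ Hw; last by nia.
      have -> : x = 0 by nia.
      by have -> : y = 0 by nia.
Qed.

Lemma par3 n alpha x y z x' y' : ~~ (3 %| n) ->
  x * 6 + y * (6 * alpha + 3) + z * n = x' * 6 + y' * (6 * alpha + 3) -> 3 %| z.
Proof.
move=> hn E; have h : 3 %| z * n by lia.
by move: h; rewrite Euclid_dvdM // (negbTE hn) orbF.
Qed.

Lemma case2 alpha n : ~~ (3 %| n) -> 6 * alpha + 3 < n ->
  forall b, is_betti [:: 6; 6 * alpha + 3; n] b <-> b = 12 * alpha + 6 \/ b = 3 * n.
Proof.
move=> hn nlt b.
have Hdq : exists x0 y0, 3 * n = x0 * 6 + y0 * (6 * alpha + 3).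
  have := divn_eq n 2; have := ltn_pmod n (isT : 0 < 2).
  case E: (n %% 2) => [|[|r]] // _ hm.
  - by exists (n %/ 2), 0; lia.
  - by exists (n %/ 2 - alpha), 1; lia.
have n0 : 0 < n by lia.
split.
- move=> [hin [hb0 hnc]].
  case: (b =P 12 * alpha + 6) => [->|h1]; [by left|].
  case: (b =P 3 * n) => [->|h2]; [by right|].
  exfalso; apply: hnc.
  apply: (@gen_connected 6 (6 * alpha + 3) n (2 * alpha + 1) 2 3) => //; try lia.
  + move=> x y hx; case: y => [|[|y]] //=; lia.
  + move=> x y z x' y'; exact: (@par3 n alpha).
- move=> [->|->].
  + split; first by exists [:: 2 * alpha + 1; 0; 0]; split => //=; lia.
    split; first lia.
    apply: (@isolated_not_conn _ _ [:: 0; 2; 0] [:: 2 * alpha + 1; 0; 0]).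
    * split => //=; lia.
    * split => //=; lia.
    * by case; lia.
    * move=> w /factE [x [y [z [-> Hw]]]] /adjE hadj.
      have hy : 0 < y by lia.
      clear hadj.
      have z0 : z = 0.
        case: z Hw => [|z] // Hw; nia.
      subst z; case: y hy Hw => [|[|[|y]]] // _ Hw; try lia.
      by have -> : x = 0 by lia.
  + case: Hdq => x0 [y0 Hq].
    split; first by exists [:: 0; 0; 3]; split => //=; lia.
    split; first lia.
    apply: (@isolated_not_conn _ _ [:: 0; 0; 3] [:: x0; y0; 0]).
    * split => //=; lia.
    * split => //=; lia.
    * by case.
    * move=> w /factE [x [y [z [-> Hw]]]] /adjE hadj.
      have hz : 0 < z by lia.
      have hz3 : 3 %| z by apply: (@par3 n alpha x y z x0 y0); lia.
      case: z hz hz3 Hw {hadj} => [|[|[|[|z]]]] // _ _ Hw; last by nia.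
      have -> : x = 0 by nia.
      by have -> : y = 0 by nia.
Qed.

Theorem theorem4 (alpha : nat) :
  (forall m : nat, 0 < m -> odd m -> 6 * alpha + 2 < m ->
     forall b, is_betti [:: 6; 6 * alpha + 2; m] b <->
               b = 18 * alpha + 6 \/ b = 2 * m) /\
  (forall n : nat, ~~ (3 %| n) -> 6 * alpha + 3 < n ->
     forall b, is_betti [:: 6; 6 * alpha + 3; n] b <->
               b = 12 * alpha + 6 \/ b = 3 * n) /\
  (forall p : nat, 0 < p -> odd p -> 6 * alpha + 4 < p ->
     forall b, is_betti [:: 6; 6 * alpha + 4; p] b <->
               b = 18 * alpha + 12 \/ b = 2 * p).
Proof.
split; [exact: case1 | split; [exact: case2 | exact: case3]].
Qed.
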